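(* Let $P\in\Delta$ be such that the marginal distribution $p$ of $X$ has full support on $\mathcal X$. Then $\widetilde{UI}(X:Z\setminus Y)=0$ if and only if $Z$ has no unique information about $X$ with respect to $Y$, i.e. if and only if for every finite set $\mathcal A$ and every function $u:\mathcal X\times\mathcal A\to\mathbb R$ one has $R(\kappa,p,u)\ge R(\mu,p,u)$.
   Context: $X,Y,Z$ are random variables with finite state spaces $\mathcal X,\mathcal Y,\mathcal Z$ and joint distribution $P\in\Delta$, where $\Delta$ is the set of probability distributions on $\mathcal X\times\mathcal Y\times\mathcal Z$. $\Delta_P=\{Q\in\Delta: Q(X=x,Y=y)=P(X=x,Y=y)\text{ and }Q(X=x,Z=z)=P(X=x,Z=z)\ \forall x,y,z\}$, and $\widetilde{UI}(X:Z\setminus Y)=\min_{Q\in\Delta_P}MI_Q(X:Z|Y)$ (mutual information computed w.r.t. $Q$). Let $p(x)=P(X=x)$, and let $\kappa(x;y)=P(Y=y|X=x)$, $\mu(x;z)=P(Z=z|X=x)$ be the row-stochastic channel matrices. A decision problem consists of a finite action set $\mathcal A$ and a reward function $u:\mathcal X\times\mathcal A\to\mathbb R$. For a channel $\nu\in[0,1]^{\mathcal X\times\mathcal W}$ (to a finite set $\mathcal W$), the maximal expected reward is $R(\nu,p,u)=\sum_{w\in\mathcal W}\max_{a\in\mathcal A}\sum_{x\in\mathcal X}p(x)\nu(x;w)u(x,a)$, i.e. the expected reward of an agent who observes the output $w$ of the channel and then chooses an action maximizing the posterior expected reward $\sum_x P(X=x|W=w)u(x,a)$. *)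

(* Defs.v *)
From mathcomp Require Import all_boot.
From Stdlib Require Import Reals ClassicalEpsilon.

Set Implicit Arguments.
Unset Strict Implicit.
Unset Printing Implicit Defensive.

Definition rsum (T : finType) (f : T -> R) : R := \big[Rplus/R0]_(t : T) f t.

Definition rmax (T : finType) (a0 : T) (f : T -> R) : R :=
  \big[Rmax/f a0]_(t : T) f t.

Section Defs.
Variables (X Y Z : finType).

Definition is_dist (P : X -> Y -> Z -> R) : Prop :=
  (forall x y z, 0 <= P x y z)%R /\
  rsum (fun x => rsum (fun y => rsum (fun z => P x y z))) = 1%R.

Definition margXY (P : X -> Y -> Z -> R) (x : X) (y : Y) : R := rsum (fun z => P x y z).
Definition margXZ (P : X -> Y -> Z -> R) (x : X) (z : Z) : R := rsum (fun y => P x y z).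
Definition margYZ (P : X -> Y -> Z -> R) (y : Y) (z : Z) : R := rsum (fun x => P x y z).
Definition margX (P : X -> Y -> Z -> R) (x : X) : R := rsum (fun y => margXY P x y).
Definition margY (P : X -> Y -> Z -> R) (y : Y) : R := rsum (fun x => margXY P x y).

Definition DeltaP (P Q : X -> Y -> Z -> R) : Prop :=
  is_dist Q /\
  (forall x y, margXY Q x y = margXY P x y) /\
  (forall x z, margXZ Q x z = margXZ P x z).

(* conditional mutual information MI_Q(X:Z|Y), natural log, 0 log 0 = 0 *)
Definition condMI (Q : X -> Y -> Z -> R) : R :=
  rsum (fun x => rsum (fun y => rsum (fun z =>
    if Rlt_dec 0 (Q x y z) then
      (Q x y z * ln (Q x y z * margY Q y / (margXY Q x y * margYZ Q y z)))%R
    else 0%R))).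

Definition is_UI_min (P : X -> Y -> Z -> R) (v : R) : Prop :=
  (exists Q, DeltaP P Q /\ condMI Q = v) /\
  (forall Q, DeltaP P Q -> (v <= condMI Q)%R).

(* UI~(X : Z \ Y) = min_{Q in Delta_P} MI_Q(X:Z|Y) (the minimum is attained) *)
Definition UItilde (P : X -> Y -> Z -> R) : R :=
  epsilon (inhabits 0%R) (is_UI_min P).

Definition kappa (P : X -> Y -> Z -> R) (x : X) (y : Y) : R := (margXY P x y / margX P x)%R.
Definition mu (P : X -> Y -> Z -> R) (x : X) (z : Z) : R := (margXZ P x z / margX P x)%R.
End Defs.

Definition reward (X W A : finType) (a0 : A) (nu : X -> W -> R) (p : X -> R)
  (u : X -> A -> R) : R :=
  rsum (fun w => rmax a0 (fun a => rsum (fun x => (p x * nu x w * u x a)%R))).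

(* Main.v *)
Require Import Defs.
From HB Require Import structures.
From mathcomp Require Import all_boot.
From Stdlib Require Import Reals Lra Lia Classical ClassicalEpsilon.
Open Scope R_scope.

Lemma RplusA' : associative Rplus. Proof. move=> x y z; ring. Qed.
Lemma RmultA' : associative Rmult. Proof. move=> x y z; ring. Qed.
HB.instance Definition _ := Monoid.isComLaw.Build R R0 Rplus RplusA' Rplus_comm Rplus_0_l.
Lemma Rmult_0l' : left_zero R0 Rmult. Proof. move=> x; ring. Qed.
Lemma Rmult_0r' : right_zero R0 Rmult. Proof. move=> x; ring. Qed.
HB.instance Definition _ := Monoid.isComLaw.Build R R1 Rmult RmultA' Rmult_comm Rmult_1_l.
HB.instance Definition _ := Monoid.isMulLaw.Build R R0 Rmult Rmult_0l' Rmult_0r'.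
Lemma Rdl : left_distributive Rmult Rplus. Proof. move=> x y z; ring. Qed.
Lemma Rdr : right_distributive Rmult Rplus. Proof. move=> x y z; ring. Qed.
HB.instance Definition _ := Monoid.isAddLaw.Build R Rmult Rplus Rdl Rdr.


Lemma rsum_ge0 (T : finType) (f : T -> R) : (forall t, 0 <= f t) -> 0 <= rsum f.
Proof. move=> H; rewrite /rsum; apply: (big_ind (fun v => 0 <= v)) => //; [lra| move=> ???; lra]. Qed.

Lemma rsum_le (T : finType) (f g : T -> R) : (forall t, f t <= g t) -> rsum f <= rsum g.
Proof. move=> H; rewrite /rsum; apply: (big_ind2 (fun a b => a <= b)) => //; [lra| move=> ????; lra]. Qed.

Lemma rsum_eq (T : finType) (f g : T -> R) : (forall t, f t = g t) -> rsum f = rsum g.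
Proof. by move=> H; rewrite /rsum; apply: eq_bigr => t _. Qed.

Lemma rsum_add (T : finType) (f g : T -> R) : rsum (fun t => f t + g t) = rsum f + rsum g.
Proof. by rewrite /rsum big_split. Qed.

Lemma rsum_scal (T : finType) (f : T -> R) c : rsum (fun t => c * f t) = c * rsum f.
Proof. by rewrite /rsum big_distrr. Qed.

Lemma rsum_scar (T : finType) (f : T -> R) c : rsum (fun t => f t * c) = rsum f * c.
Proof. by rewrite /rsum big_distrl. Qed.

Lemma rsum_opp (T : finType) (f : T -> R) : rsum (fun t => - f t) = - rsum f.
Proof. rewrite (@rsum_eq _ _ (fun t => (-1) * f t)) ?rsum_scal; [ring| move=> t; ring]. Qed.

Lemma rsum_sub (T : finType) (f g : T -> R) : rsum (fun t => f t - g t) = rsum f - rsum g.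
Proof. by rewrite /Rminus -rsum_opp -rsum_add. Qed.

Lemma rsum_0 (T : finType) : rsum (fun _ : T => 0) = 0.
Proof. by rewrite /rsum big1. Qed.

Lemma rsum_swap (T U : finType) (f : T -> U -> R) :
  rsum (fun t => rsum (f t)) = rsum (fun u => rsum (fun t => f t u)).
Proof. rewrite /rsum. exact: exchange_big. Qed.

Lemma rsumD1 (T : finType) (f : T -> R) (a : T) :
  rsum f = f a + rsum (fun t => if t == a then 0 else f t).
Proof.
rewrite /rsum (bigD1 a) //=; congr (_ + _).
rewrite [RHS](bigD1 a) //= eqxx Rplus_0_l; apply: eq_bigr => t /negbTE ->; done.
Qed.

Lemma rsum_pick (T : finType) (f : T -> R) (a : T) :
  rsum (fun t => if t == a then f t else 0) = f a.
Proof.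
rewrite (@rsumD1 _ _ a) eqxx (@rsum_eq _ _ (fun _ => 0)) ?rsum_0; first lra.
by move=> t; case: (t == a).
Qed.

Lemma rsum_ge0_eq0 (T : finType) (f : T -> R) :
  (forall t, 0 <= f t) -> rsum f = 0 -> forall t, f t = 0.
Proof.
move=> H H0 a; move: H0; rewrite (@rsumD1 _ _ a).
have : 0 <= rsum (fun t => if t == a then 0 else f t).
  by apply: rsum_ge0 => t; case: (t == a); [lra|].
have := H a; lra.
Qed.

Lemma rsum_term_le (T : finType) (f : T -> R) (a : T) :
  (forall t, 0 <= f t) -> f a <= rsum f.
Proof.
move=> H; rewrite (@rsumD1 _ _ a).
have : 0 <= rsum (fun t => if t == a then 0 else f t).
  by apply: rsum_ge0 => t; case: (t == a); [lra|].
lra.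
Qed.

Lemma cv_bigseq (T : Type) (s : seq T) (f : nat -> T -> R) (g : T -> R) :
  (forall t, Un_cv (fun n => f n t) (g t)) ->
  Un_cv (fun n => \big[Rplus/R0]_(t <- s) f n t) (\big[Rplus/R0]_(t <- s) g t).
Proof.
move=> H; elim: s => [|a s IH].
  rewrite big_nil; apply: (Un_cv_ext (fun _ => 0)); first by move=> n; rewrite big_nil.
  move=> e he; exists 0%nat => n _; rewrite /R_dist Rminus_0_r Rabs_R0; lra.
rewrite big_cons; apply: (Un_cv_ext (fun n => f n a + \big[Rplus/R0]_(t <- s) f n t)).
  by move=> n; rewrite big_cons.
exact: CV_plus.
Qed.

Lemma cv_rsum (T : finType) (f : nat -> T -> R) (g : T -> R) :
  (forall t, Un_cv (fun n => f n t) (g t)) ->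
  Un_cv (fun n => rsum (f n)) (rsum g).
Proof. exact: cv_bigseq. Qed.

Lemma rmax_seq_ge (T : eqType) (s : seq T) (x0 : R) (f : T -> R) a :
  a \in s -> f a <= \big[Rmax/x0]_(t <- s) f t.
Proof.
elim: s => [|b s IH] //; rewrite inE big_cons => /orP [/eqP ->|/IH h]; first exact: Rmax_l.
eapply Rle_trans; [exact h|apply: Rmax_r].
Qed.

Lemma rmax_ge (T : finType) (a0 : T) (f : T -> R) a : f a <= rmax a0 f.
Proof. exact: rmax_seq_ge (mem_index_enum a). Qed.

Lemma rmax_le (T : finType) (a0 : T) (f : T -> R) c :
  (forall a, f a <= c) -> rmax a0 f <= c.
Proof. move=> H; rewrite /rmax; apply: (big_ind (fun v => v <= c)) => // x y; exact: Rmax_lub. Qed.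

Lemma rmax_att (T : finType) (a0 : T) (f : T -> R) : exists a, rmax a0 f = f a.
Proof.
rewrite /rmax; apply: (big_ind (fun v => exists a, v = f a)); first by exists a0.
move=> x y [a ->] [b ->]; rewrite /Rmax; case: Rle_dec => _; [by exists b| by exists a].
by move=> i _; exists i.
Qed.

Definition incr (phi : nat -> nat) := forall n, (phi n < phi (S n))%coq_nat.

Lemma incr_ge (phi : nat -> nat) : incr phi -> forall n, (n <= phi n)%coq_nat.
Proof. move=> H; elim=> [|n IH]; [lia| have := H n; lia]. Qed.

Lemma incr_comp (phi psi : nat -> nat) : incr phi -> incr psi -> incr (fun n => phi (psi n)).
Proof.
move=> Hp Hq n.
have mono : forall a b, (a < b)%coq_nat -> (phi a < phi b)%coq_nat.
  move=> a b; elim: b => [|b IH] h; first lia.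
  have := Hp b; case: (Nat.eq_dec a b) => [->|ne]; first lia.
  have := IH ltac:(lia); lia.
exact: mono (Hq n).
Qed.

Lemma cv_subseq (u : nat -> R) l phi : incr phi -> Un_cv u l -> Un_cv (fun n => u (phi n)) l.
Proof.
move=> Hp Hu e he; have [N HN] := Hu e he; exists N => n hn.
apply: HN; have := incr_ge _ Hp n; lia.
Qed.

Lemma inv_small e : 0 < e -> exists K : nat, forall n, (K <= n)%coq_nat -> / (INR n + 1) < e.
Proof.
move=> he; have [K HK] := archimed_cor1 e he.
exists K => n hn.
have h1 : 0 < INR K by case: HK => _ h; apply: lt_0_INR.
have h2 : INR K <= INR n by apply: le_INR.
case: HK => HK _.
apply: Rle_lt_trans HK; apply: Rinv_le_contravar => //; lra.
Qed.

Lemma bw1 (u : nat -> R) M : (forall n, Rabs (u n) <= M) ->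
  exists phi l, incr phi /\ Un_cv (fun n => u (phi n)) l.
Proof.
move=> Hb.
have cX : compact (fun c => -M <= c <= M) by apply: compact_P3.
have hX : forall n, -M <= u n <= M.
  move=> n; have := Hb n; split_Rabs; lra.
have [l Hl] := Bolzano_Weierstrass u _ cX hX.
have H : forall N k : nat, exists p, (N <= p)%coq_nat /\ Rabs (u p - l) < / (INR k + 1).
  move=> N k.
  have hk : 0 < / (INR k + 1) by apply: Rinv_0_lt_compat; have := pos_INR k; lra.
  have [p [hp hv]] := Hl (disc l (mkposreal _ hk)) N (ex_intro _ (mkposreal _ hk) (fun y h => h)).
  by exists p; split.
pose g N k := proj1_sig (constructive_indefinite_description _ (H N k)).
have gP : forall N k, (N <= g N k)%coq_nat /\ Rabs (u (g N k) - l) < / (INR k + 1).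
  by move=> N k; rewrite /g; case: constructive_indefinite_description.
pose phi := fix phi n := match n with 0 => g 0%nat 0%nat | S m => g (S (phi m)) (S m) end.
exists phi, l; split.
  move=> n /=; have := (gP (S (phi n)) (S n)).1; lia.
move=> e he; have [K HK] := inv_small e he; exists K => n hn.
rewrite /R_dist; apply: Rlt_trans (HK n hn).
by case: n {hn} => [|n] /=; [exact: (gP _ _).2 | exact: (gP _ _).2].
Qed.

Lemma bwn (I : finType) (q : nat -> I -> R) M : (forall n i, Rabs (q n i) <= M) ->
  exists phi L, incr phi /\ forall i, Un_cv (fun n => q (phi n) i) (L i).
Proof.
move=> Hb.
suff : forall s : seq I, exists phi L, incr phi /\ forall i, i \in s -> Un_cv (fun n => q (phi n) i) (L i).
  move=> /(_ (index_enum I)) [phi [L [h1 h2]]]; exists phi, L; split => // i.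
  exact: h2 (mem_index_enum i).
elim=> [|j s [phi [L [h1 h2]]]].
  exists (fun n : nat => n), (fun _ => 0); split => //; move=> n /=; lia.
have [psi [l [h3 h4]]] := bw1 (fun n => q (phi n) j) M (fun n => Hb _ _).
exists (fun n => phi (psi n)), (fun i => if i == j then l else L i); split.
  exact: incr_comp.
move=> i; rewrite inE; case: eqP => [-> _ //|_ /= hi].
exact: cv_subseq (fun n => q (phi n) i) _ _ h3 (h2 i hi).
Qed.

Lemma evt (I : finType) (K : (I -> R) -> Prop) (f : (I -> R) -> R) M :
  (exists q, K q) -> (forall q, K q -> forall i, Rabs (q i) <= M) ->
  (forall q, K q -> 0 <= f q) ->
  (forall (q : nat -> I -> R) L, (forall n, K (q n)) ->
     (forall i, Un_cv (fun n => q n i) (L i)) -> K L /\ Un_cv (fun n => f (q n)) (f L)) ->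
  exists L, K L /\ forall q, K q -> f L <= f q.
Proof.
move=> [q0 Kq0] Hb Hf0 Hc.
pose E v := exists q, K q /\ v = - f q.
have Eb : bound E by exists 0 => v [q [Kq ->]]; have := Hf0 q Kq; lra.
have [m' [Hub Hlub]] := completeness E Eb (ex_intro _ (- f q0) (ex_intro _ q0 (conj Kq0 erefl))).
have lb : forall q, K q -> - m' <= f q.
  move=> q Kq; have := Hub (- f q) (ex_intro _ q (conj Kq erefl)); lra.
have ex : forall k : nat, exists q, K q /\ f q < - m' + / (INR k + 1).
  move=> k; apply: NNPP => hn.
  have hk : 0 < / (INR k + 1) by apply: Rinv_0_lt_compat; have := pos_INR k; lra.
  have : is_upper_bound E (m' - / (INR k + 1)).
    move=> v [q [Kq ->]].
    have : ~ (f q < - m' + / (INR k + 1)) by move=> h; apply: hn; exists q.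
    lra.
  move=> /Hlub; lra.
pose qs k := proj1_sig (constructive_indefinite_description _ (ex k)).
have qsP : forall k, K (qs k) /\ f (qs k) < - m' + / (INR k + 1).
  by move=> k; rewrite /qs; case: constructive_indefinite_description.
have [phi [L [hphi hL]]] := bwn _ qs M (fun n i => Hb _ (qsP n).1 i).
have [KL cvL] := Hc (fun n => qs (phi n)) L (fun n => (qsP (phi n)).1) hL.
exists L; split => // q Kq.
suff -> : f L = - m' by apply: lb.
apply: (UL_sequence _ _ _ cvL) => e he.
have [N HN] := inv_small e he; exists N => n hn; rewrite /R_dist.
have h1 := lb _ (qsP (phi n)).1.
have h2 := (qsP (phi n)).2.
have h3 : / (INR (phi n) + 1) <= / (INR n + 1).
  apply: Rinv_le_contravar; first by have := pos_INR n; lra.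
  have := le_INR _ _ (incr_ge _ hphi n); lra.
have := HN n hn; rewrite Rabs_right; lra.
Qed.

Lemma ln_le_sub1 y : 0 < y -> ln y <= y - 1.
Proof.
move=> hy; case: (Req_dec y 1) => [->|ne]; first by rewrite ln_1; lra.
have := exp_ineq1 (ln y) (ln_neq_0 _ ne hy); rewrite exp_ln //; lra.
Qed.

Lemma ln_lt_sub1 y : 0 < y -> y <> 1 -> ln y < y - 1.
Proof. move=> hy ne; have := exp_ineq1 (ln y) (ln_neq_0 _ ne hy); rewrite exp_ln //; lra. Qed.

Lemma logterm a b c d : 0 < a -> 0 < b -> 0 < c -> 0 < d ->
  a - c * d / b <= a * ln (a * b / (c * d)) /\
  (a * ln (a * b / (c * d)) = a - c * d / b -> a * b = c * d).
Proof.
move=> ha hb hc hd.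
have hw : 0 < c * d / b by apply: Rdiv_lt_0_compat => //; apply: Rmult_lt_0_compat.
have E : ln (a * b / (c * d)) = - ln (c * d / b / a).
  rewrite -ln_Rinv; last by apply: Rdiv_lt_0_compat.
  congr ln; field; lra.
have hy : 0 < c * d / b / a by apply: Rdiv_lt_0_compat.
rewrite E; split.
  have := ln_le_sub1 _ hy.
  have -> : a - c * d / b = a * (- (c * d / b / a - 1)) by field; lra.
  move=> h; apply: Rmult_le_compat_l; lra.
move=> Heq; apply: NNPP => ne.
have ne' : c * d / b / a <> 1.
  move=> h; apply: ne; have e1 : c * d / b = (c * d / b / a) * a by field; lra.
  rewrite h Rmult_1_l in e1; rewrite -e1; field; lra.
have := ln_lt_sub1 _ hy ne'.
have E2 : a - c * d / b = a * (- (c * d / b / a - 1)) by field; lra.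
rewrite E2 in Heq.
move=> h; have : a * - ln (c * d / b / a) > a * - (c * d / b / a - 1).
  apply: Rmult_lt_compat_l; lra.
lra.
Qed.

Section Gibbs.
End Gibbs.

Lemma Q_le_XY (X Y Z : finType) (Q : X -> Y -> Z -> R) x y z :
  (forall x y z, 0 <= Q x y z) -> Q x y z <= margXY Q x y.
Proof. move=> h; rewrite /margXY; apply: (rsum_term_le _ (fun z => Q x y z) z) => t; exact: h. Qed.
Lemma Q_le_YZ (X Y Z : finType) (Q : X -> Y -> Z -> R) x y z :
  (forall x y z, 0 <= Q x y z) -> Q x y z <= margYZ Q y z.
Proof. move=> h; rewrite /margYZ; apply: (rsum_term_le _ (fun x => Q x y z) x) => t; exact: h. Qed.
Lemma XY_ge0 (X Y Z : finType) (Q : X -> Y -> Z -> R) x y :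
  (forall x y z, 0 <= Q x y z) -> 0 <= margXY Q x y.
Proof. move=> h; exact: rsum_ge0. Qed.
Lemma YZ_ge0 (X Y Z : finType) (Q : X -> Y -> Z -> R) y z :
  (forall x y z, 0 <= Q x y z) -> 0 <= margYZ Q y z.
Proof. move=> h; exact: rsum_ge0. Qed.
Lemma XY_le_Y (X Y Z : finType) (Q : X -> Y -> Z -> R) x y :
  (forall x y z, 0 <= Q x y z) -> margXY Q x y <= margY Q y.
Proof. move=> h; rewrite /margY; apply: (rsum_term_le _ (fun x => margXY Q x y) x) => t; exact: XY_ge0. Qed.
Lemma Y_eq_YZ (X Y Z : finType) (Q : X -> Y -> Z -> R) y :
  margY Q y = rsum (fun z => margYZ Q y z).
Proof. rewrite /margY /margYZ /margXY; exact: rsum_swap. Qed.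

Arguments Q_le_XY {X Y Z Q}.
Arguments Q_le_YZ {X Y Z Q}.
Arguments XY_ge0 {X Y Z Q}.
Arguments YZ_ge0 {X Y Z Q}.
Arguments XY_le_Y {X Y Z Q}.

Lemma rsum3_eq (X Y Z : finType) (f g : X -> Y -> Z -> R) :
  (forall x y z, f x y z = g x y z) ->
  rsum (fun x => rsum (fun y => rsum (fun z => f x y z))) =
  rsum (fun x => rsum (fun y => rsum (fun z => g x y z))).
Proof. move=> h; do 3 (apply: rsum_eq => ?); exact: h. Qed.

Lemma rsum3_add (X Y Z : finType) (f g : X -> Y -> Z -> R) :
  rsum (fun x => rsum (fun y => rsum (fun z => f x y z + g x y z))) =
  rsum (fun x => rsum (fun y => rsum (fun z => f x y z))) +
  rsum (fun x => rsum (fun y => rsum (fun z => g x y z))).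
Proof.
rewrite -rsum_add; apply: rsum_eq => x; rewrite -rsum_add; apply: rsum_eq => y.
exact: rsum_add.
Qed.

Lemma rsum3_ge0 (X Y Z : finType) (f : X -> Y -> Z -> R) :
  (forall x y z, 0 <= f x y z) -> 0 <= rsum (fun x => rsum (fun y => rsum (fun z => f x y z))).
Proof. move=> h; do 3 (apply: rsum_ge0 => ?); exact: h. Qed.

Lemma rsum3_eq0 (X Y Z : finType) (f : X -> Y -> Z -> R) :
  (forall x y z, 0 <= f x y z) -> rsum (fun x => rsum (fun y => rsum (fun z => f x y z))) = 0 ->
  forall x y z, f x y z = 0.
Proof.
move=> h H x y z.
have h2 : forall x y, 0 <= rsum (fun z => f x y z) by move=> ??; apply: rsum_ge0.
have h1 : forall x, 0 <= rsum (fun y => rsum (fun z => f x y z)) by move=> ?; apply: rsum_ge0.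
have := rsum_ge0_eq0 _ _ h1 H x => /(rsum_ge0_eq0 _ _ (h2 x))/(_ y).
by move/(rsum_ge0_eq0 _ _ (h x y)).
Qed.

Definition condMIterm (X Y Z : finType) (Q : X -> Y -> Z -> R) x y z :=
  if Rlt_dec 0 (Q x y z) then
      (Q x y z * ln (Q x y z * margY Q y / (margXY Q x y * margYZ Q y z)))%R
    else 0%R.

Definition rterm (X Y Z : finType) (Q : X -> Y -> Z -> R) x y z :=
  if Rlt_dec 0 (margY Q y) then margXY Q x y * margYZ Q y z / margY Q y else 0.

Arguments condMIterm {X Y Z}.
Arguments rterm {X Y Z}.

Lemma rterm_sum (X Y Z : finType) (Q : X -> Y -> Z -> R) : is_dist Q ->
  rsum (fun x => rsum (fun y => rsum (fun z => rterm Q x y z))) = 1.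
Proof.
move=> [h0 h1]; rewrite rsum_swap.
have -> : 1 = rsum (fun y => margY Q y) by rewrite -h1 /margY /margXY rsum_swap.
apply: rsum_eq => y; rewrite /rterm; case: Rlt_dec => hy /=.
  rewrite (@rsum_eq _ _ (fun x => margXY Q x y * (rsum (fun z => margYZ Q y z) / margY Q y))).
    by rewrite rsum_scar -Y_eq_YZ -/(margY Q y); field; lra.
  move=> x; rewrite /Rdiv -rsum_scar -rsum_scal; apply: rsum_eq => z; ring.
have : 0 <= margY Q y by apply: rsum_ge0 => x; apply: XY_ge0.
rewrite (@rsum_eq _ _ (fun _ => 0)) ?rsum_0; [lra| done].
Qed.

Lemma gibbs (X Y Z : finType) (Q : X -> Y -> Z -> R) : is_dist Q ->
  0 <= condMI Q /\
  (condMI Q = 0 -> forall x y z, Q x y z * margY Q y = margXY Q x y * margYZ Q y z).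
Proof.
move=> hd; have [h0 h1] := hd.
pose e x y z := condMIterm Q x y z - (Q x y z - rterm Q x y z).
have Ee : condMI Q = rsum (fun x => rsum (fun y => rsum (fun z => e x y z))).
  rewrite /e (@rsum3_eq _ _ _ _ (fun x y z => condMIterm Q x y z + (- Q x y z + rterm Q x y z))); last by move=> *; ring.
  rewrite rsum3_add (@rsum3_eq _ _ _ (fun x y z => - Q x y z + rterm Q x y z) (fun x y z => (-1) * Q x y z + rterm Q x y z)); last by move=> *; ring.
  rewrite rsum3_add rterm_sum //.
  have -> : rsum (fun x => rsum (fun y => rsum (fun z => (-1) * Q x y z))) = -1.
    have -> : rsum (fun x => rsum (fun y => rsum (fun z => (-1) * Q x y z))) =
      (-1) * rsum (fun x => rsum (fun y => rsum (fun z => Q x y z))).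
      rewrite -rsum_scal; apply: rsum_eq => x; rewrite -rsum_scal.
      apply: rsum_eq => y; exact: rsum_scal.
    rewrite h1; ring.
  rewrite /condMI /condMIterm; ring.
have pos : forall x y z, 0 < Q x y z -> 0 < margXY Q x y /\ 0 < margYZ Q y z /\ 0 < margY Q y.
  move=> x y z hq; have := Q_le_XY x y z h0; have := Q_le_YZ x y z h0; have := XY_le_Y x y h0.
  lra.
have e0 : forall x y z, 0 <= e x y z.
  move=> x y z; rewrite /e /condMIterm /rterm.
  case: Rlt_dec => hq /=.
    have [a [b c]] := pos _ _ _ hq; case: Rlt_dec => // hy0 /=.
    have := (logterm _ _ _ _ hq c a b).1; lra.
  have := h0 x y z; case: Rlt_dec => hy /=; last lra.
  have : 0 <= margXY Q x y * margYZ Q y z / margY Q y.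
    apply: Rmult_le_pos; last by left; apply: Rinv_0_lt_compat.
    apply: Rmult_le_pos; [exact: XY_ge0| exact: YZ_ge0].
  lra.
split; first by rewrite Ee; apply: rsum3_ge0.
move=> H0 x y z; rewrite Ee in H0; have := rsum3_eq0 _ _ _ _ e0 H0 x y z.
rewrite /e /condMIterm /rterm; case: Rlt_dec => hq /=.
  have [a [b c]] := pos _ _ _ hq; case: Rlt_dec => // hy0 /= h.
  apply: (logterm _ _ _ _ hq c a b).2; lra.
have hq0 : Q x y z = 0 by have := h0 x y z; lra.
rewrite hq0 Rmult_0_l; case: Rlt_dec => hy /= h.
  have : margXY Q x y * margYZ Q y z / margY Q y = 0 by lra.
  move=> h2; have E3 : margXY Q x y * margYZ Q y z = margXY Q x y * margYZ Q y z / margY Q y * margY Q y.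
    field; lra.
  rewrite h2 Rmult_0_l in E3; lra.
have : margXY Q x y = 0.
  have := XY_le_Y x y h0; have := XY_ge0 x y h0; have : 0 <= margY Q y.
    by apply: rsum_ge0 => ?; apply: XY_ge0.
  lra.
by move=> ->; ring.
Qed.

Lemma indep_MI0 (X Y Z : finType) (Q : X -> Y -> Z -> R) : 
  (forall x y z, Q x y z * margY Q y = margXY Q x y * margYZ Q y z) -> condMI Q = 0.
Proof.
move=> H; rewrite /condMI (@rsum3_eq _ _ _ _ (fun _ _ _ => 0)).
  by rewrite (@rsum_eq _ _ (fun _ => 0)) ?rsum_0 // => x; rewrite (@rsum_eq _ _ (fun _ => 0)) ?rsum_0 // => y; rewrite rsum_0.
move=> x y z; case: Rlt_dec => // hq /=.
rewrite -H.
case: (Req_dec (Q x y z * margY Q y) 0) => h.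
  rewrite h; unfold Rdiv; rewrite Rmult_0_l; unfold ln; case: Rlt_dec => [h'|_]; [exfalso; exact: (Rlt_irrefl 0 h')| ring].
unfold Rdiv; by rewrite Rinv_r // ln_1 Rmult_0_r.
Qed.

Lemma phi_small t : 0 < t -> t < 1 -> Rabs (t * ln t) <= 2 * sqrt t.
Proof.
move=> h0 h1; set s := sqrt t.
have hs : 0 < s by apply: sqrt_lt_R0.
have hss : s * s = t by apply: sqrt_sqrt; lra.
have hs1 : s < 1 by rewrite /s -sqrt_1; apply: sqrt_lt_1; lra.
have Et : ln t = - 2 * ln (/ s).
  rewrite ln_Rinv // -hss ln_mult //; ring.
have hl := ln_le_sub1 (/ s) (Rinv_0_lt_compat _ hs).
have hl0 : 0 < ln (/ s).
  rewrite ln_Rinv //; have : ln s < ln 1 by apply: ln_increasing.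
  rewrite ln_1; lra.
rewrite Et Rabs_left; last first.
  have : 0 < t * (2 * ln (/ s)) by apply: Rmult_lt_0_compat; lra.
  lra.
have : t * (2 * ln (/ s)) <= t * (2 * (/ s)).
  apply: Rmult_le_compat_l; lra.
have -> : t * (2 * / s) = 2 * s by rewrite -hss; field; lra.
lra.
Qed.

Lemma cv_ge0 (u : nat -> R) a : (forall n, 0 <= u n) -> Un_cv u a -> 0 <= a.
Proof.
move=> h hu; apply: Rnot_lt_le => ha.
have [N HN] := hu (- a) ltac:(lra).
have := HN N (le_n N); have := h N; rewrite /R_dist; split_Rabs; lra.
Qed.

Lemma cv_phi (u : nat -> R) a : (forall n, 0 <= u n) -> Un_cv u a ->
  Un_cv (fun n => u n * ln (u n)) (a * ln a).
Proof.
move=> h hu; have ha := cv_ge0 _ _ h hu.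
case: (Rle_lt_or_eq_dec _ _ ha) => [ha'|E]; last subst a.
  apply: CV_mult => //; apply: continuity_seq => //.
  apply: derivable_continuous_pt; exists (/ a); exact: derivable_pt_lim_ln.
rewrite Rmult_0_l => e he.
have he2 : 0 < Rmin 1 ((e / 2) * (e / 2)).
  apply: Rmin_pos; first lra; apply: Rmult_lt_0_compat; lra.
have [N HN] := hu _ he2; exists N => n hn.
have := HN n hn; rewrite /R_dist Rminus_0_r Rabs_right; last exact: Rle_ge (h n).
move=> hlt; have hn0 := h n.
rewrite Rminus_0_r.
case: (Rle_lt_or_eq_dec _ _ hn0) => [p|<-]; last by rewrite Rmult_0_l Rabs_R0.
have h1 : u n < 1 by have := Rmin_l 1 (e / 2 * (e / 2)); lra.
apply: Rle_lt_trans (phi_small _ p h1) _.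
have : sqrt (u n) < e / 2.
  rewrite -(sqrt_square (e / 2)); last lra.
  apply: sqrt_lt_1; [lra| apply: Rmult_le_pos; lra|].
  have := Rmin_r 1 (e / 2 * (e / 2)); lra.
lra.
Qed.

Definition phi (t : R) := t * ln t.

Lemma condMI_phi (X Y Z : finType) (Q : X -> Y -> Z -> R) :
  (forall x y z, 0 <= Q x y z) ->
  condMI Q + rsum (fun x => rsum (fun y => phi (margXY Q x y)))
           + rsum (fun y => rsum (fun z => phi (margYZ Q y z))) =
  rsum (fun x => rsum (fun y => rsum (fun z => phi (Q x y z)))) + rsum (fun y => phi (margY Q y)).
Proof.
move=> h0.
have T2 : rsum (fun x => rsum (fun y => rsum (fun z => Q x y z * ln (margY Q y)))) =
          rsum (fun y => phi (margY Q y)).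
  rewrite (@rsum_eq _ _ (fun x => rsum (fun y => margXY Q x y * ln (margY Q y)))); last first.
    by move=> x; apply: rsum_eq => y; rewrite rsum_scar.
  rewrite rsum_swap; apply: rsum_eq => y; rewrite rsum_scar //.
have T3 : rsum (fun x => rsum (fun y => rsum (fun z => Q x y z * ln (margXY Q x y)))) =
          rsum (fun x => rsum (fun y => phi (margXY Q x y))).
  by apply: rsum_eq => x; apply: rsum_eq => y; rewrite rsum_scar.
have T4 : rsum (fun x => rsum (fun y => rsum (fun z => Q x y z * ln (margYZ Q y z)))) =
          rsum (fun y => rsum (fun z => phi (margYZ Q y z))).
  rewrite rsum_swap; apply: rsum_eq => y; rewrite rsum_swap; apply: rsum_eq => z.
  by rewrite rsum_scar.
rewrite -T2 -T3 -T4 /condMI -!rsum3_add; apply: rsum3_eq => x y z.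
rewrite /phi; case: Rlt_dec => hq /=; last first.
  have -> : Q x y z = 0 by have := h0 x y z; lra.
  ring.
have a := Q_le_XY x y z h0; have b := Q_le_YZ x y z h0; have c := XY_le_Y x y h0.
have hXY : 0 < margXY Q x y by lra.
have hYZ : 0 < margYZ Q y z by lra.
have hY : 0 < margY Q y by lra.
unfold Rdiv; rewrite ln_mult; last by apply: Rinv_0_lt_compat; apply: Rmult_lt_0_compat.
  rewrite ln_Rinv; last by apply: Rmult_lt_0_compat.
  rewrite !ln_mult //; ring.
by apply: Rmult_lt_0_compat.
Qed.

Arguments condMI_phi {X Y Z Q}.

Lemma condMI_cont (X Y Z : finType) (qn : nat -> X -> Y -> Z -> R) (L : X -> Y -> Z -> R) :
  (forall n x y z, 0 <= qn n x y z) ->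
  (forall x y z, Un_cv (fun n => qn n x y z) (L x y z)) ->
  Un_cv (fun n => condMI (qn n)) (condMI L).
Proof.
move=> h0 hc.
have hL : forall x y z, 0 <= L x y z by move=> x y z; exact: cv_ge0 (fun n => h0 n x y z) (hc x y z).
have E : forall Q : X -> Y -> Z -> R, (forall x y z, 0 <= Q x y z) -> condMI Q =
  rsum (fun x => rsum (fun y => rsum (fun z => phi (Q x y z)))) + rsum (fun y => phi (margY Q y))
  - rsum (fun x => rsum (fun y => phi (margXY Q x y)))
  - rsum (fun y => rsum (fun z => phi (margYZ Q y z))).
  move=> Q hQ; have := condMI_phi hQ; lra.
rewrite E //; apply: (Un_cv_ext (fun n =>
  rsum (fun x => rsum (fun y => rsum (fun z => phi (qn n x y z)))) + rsum (fun y => phi (margY (qn n) y))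
  - rsum (fun x => rsum (fun y => phi (margXY (qn n) x y)))
  - rsum (fun y => rsum (fun z => phi (margYZ (qn n) y z))))).
  by move=> n; rewrite E.
have cXY : forall x y, Un_cv (fun n => margXY (qn n) x y) (margXY L x y).
  by move=> x y; apply: cv_rsum => z; apply: hc.
have cYZ : forall y z, Un_cv (fun n => margYZ (qn n) y z) (margYZ L y z).
  by move=> y z; apply: cv_rsum => x; apply: hc.
have cY : forall y, Un_cv (fun n => margY (qn n) y) (margY L y).
  by move=> y; apply: cv_rsum => x; apply: cXY.
apply: CV_minus; first apply: CV_minus; first apply: CV_plus.
- apply: cv_rsum => x; apply: cv_rsum => y; apply: cv_rsum => z.
  apply: cv_phi; [move=> n; exact: h0| exact: hc].
- apply: cv_rsum => y; apply: cv_phi; last exact: cY.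
  by move=> n; apply: rsum_ge0 => x; apply: XY_ge0.
- apply: cv_rsum => x; apply: cv_rsum => y; apply: cv_phi; last exact: cXY.
  by move=> n; apply: XY_ge0.
- apply: cv_rsum => y; apply: cv_rsum => z; apply: cv_phi; last exact: cYZ.
  by move=> n; apply: YZ_ge0.
Qed.

Lemma cv_const_eq (u : nat -> R) l c : Un_cv u l -> (forall n, u n = c) -> l = c.
Proof.
move=> hu hc; apply: (UL_sequence u) => // e he; exists 0%nat => n _.
rewrite /R_dist hc Rminus_diag Rabs_R0; lra.
Qed.

Lemma dist_le1 (X Y Z : finType) (Q : X -> Y -> Z -> R) : is_dist Q -> forall x y z, Q x y z <= 1.
Proof.
move=> [h0 h1] x y z; rewrite -h1.
apply: Rle_trans (Q_le_XY x y z h0) _.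
apply: Rle_trans (_ : rsum (fun y => margXY Q x y) <= _).
  apply: (rsum_term_le _ (fun y => margXY Q x y) y) => t; exact: XY_ge0.
apply: (rsum_term_le _ (fun x => rsum (fun y => margXY Q x y)) x) => t.
apply: rsum_ge0 => t'; exact: XY_ge0.
Qed.

Lemma UI_min_exists (X Y Z : finType) (P : X -> Y -> Z -> R) : is_dist P ->
  exists Qm, DeltaP P Qm /\ forall Q, DeltaP P Q -> condMI Qm <= condMI Q.
Proof.
move=> hP.
pose Qof (g : (X * Y * Z)%type -> R) := fun x y z => g (x, y, z).
have A1 : exists g, DeltaP P (Qof g) by exists (fun t => P t.1.1 t.1.2 t.2); split.
have A2 : forall g, DeltaP P (Qof g) -> forall i, Rabs (g i) <= 1.
  move=> g [hd _] [[x y] z]; have := dist_le1 _ _ _ _ hd x y z; have := hd.1 x y z.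
  rewrite /Qof /= => a b; rewrite Rabs_right; lra.
have A3 : forall g, DeltaP P (Qof g) -> 0 <= condMI (Qof g).
  by move=> g [hd _]; exact: (gibbs _ _ _ _ hd).1.
have A4 : forall (qn : nat -> (X * Y * Z)%type -> R) L, (forall n, DeltaP P (Qof (qn n))) ->
     (forall i, Un_cv (fun n => qn n i) (L i)) -> DeltaP P (Qof L) /\ Un_cv (fun n => condMI (Qof (qn n))) (condMI (Qof L)).
  move=> qn L hK hc.
  have hc' : forall x y z, Un_cv (fun n => Qof (qn n) x y z) (Qof L x y z).
    by move=> x y z; apply: hc.
  have h0 : forall n x y z, 0 <= Qof (qn n) x y z by move=> n x y z; exact: (hK n).1.1.
  split; last exact: condMI_cont h0 hc'.
  split; [split|split].
  + by move=> x y z; exact: cv_ge0 (fun n => h0 n x y z) (hc' x y z).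
  + apply: (cv_const_eq (fun n => rsum (fun x => rsum (fun y => rsum (fun z => Qof (qn n) x y z))))).
      by apply: cv_rsum => x; apply: cv_rsum => y; apply: cv_rsum => z; apply: hc'.
    by move=> n; exact: (hK n).1.2.
  + move=> x y; apply: (cv_const_eq (fun n => margXY (Qof (qn n)) x y)).
      by apply: cv_rsum => z; apply: hc'.
    by move=> n; exact: (hK n).2.1.
  + move=> x z; apply: (cv_const_eq (fun n => margXZ (Qof (qn n)) x z)).
      by apply: cv_rsum => y; apply: hc'.
    by move=> n; exact: (hK n).2.2.
have [L [KL HL]] := evt _ (fun g => DeltaP P (Qof g)) (fun g => condMI (Qof g)) 1 A1 A2 A3 A4.
exists (Qof L); split => // Q hQ.
exact: (HL (fun t => Q t.1.1 t.1.2 t.2) hQ).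
Qed.

Lemma UItilde_spec (X Y Z : finType) (P : X -> Y -> Z -> R) : is_dist P ->
  is_UI_min P (UItilde P).
Proof.
move=> hP; rewrite /UItilde; apply: epsilon_spec.
have [Qm [hm H]] := UI_min_exists _ _ _ _ hP.
exists (condMI Qm); split; [by exists Qm | exact: H].
Qed.

Lemma rmax_eq (T : finType) (a0 : T) (f g : T -> R) : (forall a, f a = g a) -> rmax a0 f = rmax a0 g.
Proof. move=> H; rewrite /rmax H; apply: eq_bigr => a _; exact: H. Qed.

Lemma reward_mu (X Y Z A : finType) (P : X -> Y -> Z -> R) (a0 : A) u :
  (forall x, 0 < margX P x) ->
  reward a0 (mu P) (margX P) u = rsum (fun z => rmax a0 (fun a => rsum (fun x => margXZ P x z * u x a))).
Proof.
move=> hX; apply: rsum_eq => z; apply: rmax_eq => a; apply: rsum_eq => x.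
rewrite /mu; field; have := hX x; lra.
Qed.

Lemma reward_kappa (X Y Z A : finType) (P : X -> Y -> Z -> R) (a0 : A) u :
  (forall x, 0 < margX P x) ->
  reward a0 (kappa P) (margX P) u = rsum (fun y => rmax a0 (fun a => rsum (fun x => margXY P x y * u x a))).
Proof.
move=> hX; apply: rsum_eq => z; apply: rmax_eq => a; apply: rsum_eq => x.
rewrite /kappa; field; have := hX x; lra.
Qed.

Lemma garble_reward (X Y Z A : finType) (P : X -> Y -> Z -> R) (lam : Y -> Z -> R) (a0 : A) u :
  (forall x, 0 < margX P x) ->
  (forall y z, 0 <= lam y z) ->
  (forall y, rsum (fun z => lam y z) = 1 \/ forall x, margXY P x y = 0) ->
  (forall x z, margXZ P x z = rsum (fun y => margXY P x y * lam y z)) ->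
  reward a0 (mu P) (margX P) u <= reward a0 (kappa P) (margX P) u.
Proof.
move=> hX hl hs hc; rewrite reward_mu // reward_kappa //.
pose F y a := rsum (fun x => margXY P x y * u x a).
pose M y := rmax a0 (F y).
have E1 : forall z a, rsum (fun x => margXZ P x z * u x a) = rsum (fun y => lam y z * F y a).
  move=> z a; rewrite (@rsum_eq _ _ (fun x => rsum (fun y => margXY P x y * lam y z * u x a))).
    rewrite rsum_swap; apply: rsum_eq => y; rewrite /F -rsum_scal; apply: rsum_eq => x; ring.
  by move=> x; rewrite hc -rsum_scar.
apply: Rle_trans (_ : rsum (fun z => rsum (fun y => lam y z * M y)) <= _).
  apply: rsum_le => z; apply: rmax_le => a; rewrite E1; apply: rsum_le => y.
  apply: Rmult_le_compat_l => //; exact: rmax_ge.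
rewrite rsum_swap; right; apply: rsum_eq => y; rewrite rsum_scar.
change (rsum (lam y) * M y = M y).
case: (hs y) => [->|h0]; first ring.
have -> : M y = 0.
  have E0 : forall a, F y a = 0.
    by move=> a; rewrite /F (@rsum_eq _ _ (fun _ => 0)) ?rsum_0 // => x; rewrite h0; ring.
  apply: Rle_antisym; first by apply: rmax_le => a; rewrite E0; lra.
  by rewrite -(E0 a0); apply: rmax_ge.
ring.
Qed.

Lemma indep_garble (X Y Z : finType) (P Q : X -> Y -> Z -> R) :
  DeltaP P Q -> (forall x y z, Q x y z * margY Q y = margXY Q x y * margYZ Q y z) ->
  exists lam : Y -> Z -> R, (forall y z, 0 <= lam y z) /\
  (forall y, rsum (fun z => lam y z) = 1 \/ forall x, margXY P x y = 0) /\
  (forall x z, margXZ P x z = rsum (fun y => margXY P x y * lam y z)).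
Proof.
move=> [[h0 h1] [hXY hXZ]] hI.
pose lam y z := if Rlt_dec 0 (margY Q y) then margYZ Q y z / margY Q y else 0.
have hY0 : forall y, 0 <= margY Q y by move=> y; apply: rsum_ge0 => x; apply: XY_ge0.
exists lam; split; [|split].
- move=> y z; rewrite /lam; case: Rlt_dec => h /=; last lra.
  apply: Rmult_le_pos; [exact: YZ_ge0| left; exact: Rinv_0_lt_compat].
- move=> y; rewrite /lam; case: Rlt_dec => h /=.
    left; rewrite /Rdiv rsum_scar -Y_eq_YZ; field; lra.
  right => x; rewrite -hXY; have := XY_le_Y x y h0; have := XY_ge0 x y h0; have := hY0 y; lra.
- move=> x z; rewrite -hXZ; apply: rsum_eq => y; rewrite -hXY /lam.
  case: Rlt_dec => h /=.
    have := hI x y z; move=> e; apply: (Rmult_eq_reg_r (margY Q y)); last lra.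
    rewrite e; field; lra.
  have hy : margY Q y = 0 by have := hY0 y; lra.
  have hxy : margXY Q x y = 0 by have := XY_le_Y x y h0; have := XY_ge0 x y h0; lra.
  have := Q_le_XY x y z h0; have := h0 x y z; rewrite hxy; lra.
Qed.

Definition rsum2 (X Z : finType) (f : X -> Z -> R) := rsum (fun x => rsum (fun z => f x z)).
Arguments rsum2 {X Z}.

Lemma rsum2_eq (X Z : finType) (f g : X -> Z -> R) : (forall x z, f x z = g x z) -> rsum2 f = rsum2 g.
Proof. move=> h; apply: rsum_eq => x; apply: rsum_eq => z; exact: h. Qed.

Lemma rsum2_lin (X Z : finType) (f g h : X -> Z -> R) a b c :
  rsum2 (fun x z => a * f x z + b * g x z + c * h x z) = a * rsum2 f + b * rsum2 g + c * rsum2 h.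
Proof.
rewrite /rsum2 -!rsum_scal -!rsum_add; apply: rsum_eq => x.
by rewrite -!rsum_scal -!rsum_add.
Qed.

Lemma rsum2_ge0 (X Z : finType) (f : X -> Z -> R) : (forall x z, 0 <= f x z) -> 0 <= rsum2 f.
Proof. move=> h; apply: rsum_ge0 => x; apply: rsum_ge0 => z; exact: h. Qed.

Lemma rsum2_sq0 (X Z : finType) (f : X -> Z -> R) : rsum2 (fun x z => f x z * f x z) = 0 -> forall x z, f x z = 0.
Proof.
move=> H x z.
have h2 : forall x, 0 <= rsum (fun z => f x z * f x z) by move=> ?; apply: rsum_ge0 => ?; apply: Rle_0_sqr.
have := rsum_ge0_eq0 _ _ h2 H x => /(rsum_ge0_eq0 _ _ (fun z => Rle_0_sqr (f x z)))/(_ z).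
rewrite /Rsqr => h; nra.
Qed.

Arguments rsum2_sq0 {X Z f}.
Arguments rsum2_ge0 {X Z f}.
Arguments rsum2_eq {X Z f g}.
Arguments rsum2_lin {X Z}.

Lemma cv_const c : Un_cv (fun _ : nat => c) c.
Proof. move=> e he; exists 0%nat => n _; rewrite /R_dist Rminus_diag Rabs_R0; lra. Qed.

Definition stoch (Y Z : finType) (lam : Y -> Z -> R) :=
  (forall y z, 0 <= lam y z) /\ (forall y, rsum (fun z => lam y z) = 1).
Arguments stoch {Y Z}.

Definition cl (X Y Z : finType) (P : X -> Y -> Z -> R) (lam : Y -> Z -> R) x z :=
  rsum (fun y => margXY P x y * lam y z).
Arguments cl {X Y Z}.

Lemma Z_inhabited (X Y Z : finType) (P : X -> Y -> Z -> R) : is_dist P -> exists z : Z, True.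
Proof.
move=> [_ h1]; apply: NNPP => hn; move: h1.
rewrite (@rsum_eq _ _ (fun _ => 0)) ?rsum_0; first lra.
move=> x; rewrite (@rsum_eq _ _ (fun _ => 0)) ?rsum_0 // => y.
rewrite (@rsum_eq _ _ (fun _ => 0)) ?rsum_0 // => z; exfalso; apply: hn; by exists z.
Qed.

Lemma cl_cv (X Y Z : finType) (P : X -> Y -> Z -> R) (ln_ : nat -> Y -> Z -> R) L x z :
  (forall y z, Un_cv (fun n => ln_ n y z) (L y z)) -> Un_cv (fun n => cl P (ln_ n) x z) (cl P L x z).
Proof. move=> h; apply: cv_rsum => y; apply: CV_mult; [exact: cv_const| exact: h]. Qed.

Lemma blackwell (X Y Z : finType) (P : X -> Y -> Z -> R) : is_dist P ->
  (forall x, 0 < margX P x) ->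
  (forall (A : finType) (a0 : A) (u : X -> A -> R),
     reward a0 (mu P) (margX P) u <= reward a0 (kappa P) (margX P) u) ->
  exists lam, stoch lam /\ forall x z, margXZ P x z = cl P lam x z.
Proof.
move=> hP hX H.
have [z0 _] := Z_inhabited _ _ _ _ hP.
pose T x z := margXZ P x z.
pose Fo (lam : Y -> Z -> R) := rsum2 (fun x z => (cl P lam x z - T x z) * (cl P lam x z - T x z)).
pose Lof (g : (Y * Z)%type -> R) := fun y z => g (y, z).
have A1 : exists g, stoch (Lof g).
  exists (fun t => if t.2 == z0 then 1 else 0); split.
    by move=> y z; rewrite /Lof /=; case: (z == z0); lra.
  by move=> y; rewrite /Lof /= (rsum_pick _ (fun _ => 1)).
have A2 : forall g, stoch (Lof g) -> forall i, Rabs (g i) <= 1.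
  move=> g [h0 h1] [y z]; rewrite Rabs_right; last by apply: Rle_ge; apply: (h0 y z).
  rewrite -(h1 y); exact: (rsum_term_le _ (fun z => Lof g y z) z (h0 y)).
have A3 : forall g, stoch (Lof g) -> 0 <= Fo (Lof g).
  by move=> g _; apply: rsum2_ge0 => x z; apply: Rle_0_sqr.
have A4 : forall (qn : nat -> (Y * Z)%type -> R) L, (forall n, stoch (Lof (qn n))) ->
     (forall i, Un_cv (fun n => qn n i) (L i)) -> stoch (Lof L) /\ Un_cv (fun n => Fo (Lof (qn n))) (Fo (Lof L)).
  move=> qn L hK hc.
  have hc' : forall y z, Un_cv (fun n => Lof (qn n) y z) (Lof L y z) by move=> y z; apply: hc.
  split; first split.
  - by move=> y z; exact: cv_ge0 (fun n => (hK n).1 y z) (hc' y z).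
  - move=> y; apply: (cv_const_eq (fun n => rsum (fun z => Lof (qn n) y z))).
      by apply: cv_rsum => z; apply: hc'.
    by move=> n; exact: (hK n).2 y.
  - apply: cv_rsum => x; apply: cv_rsum => z.
    have h := cl_cv _ _ _ P _ _ x z hc'.
    apply: CV_mult; apply: CV_minus => //; exact: cv_const.
have [Lg [KL HL]] := evt _ (fun g => stoch (Lof g)) (fun g => Fo (Lof g)) 1 A1 A2 A3 A4.
set ls := Lof Lg in KL HL.
have HLs : forall lam, stoch lam -> Fo ls <= Fo lam.
  move=> lam hl; exact: (HL (fun t => lam t.1 t.2) hl).
exists ls; split => //.
pose D x z := T x z - cl P ls x z.
suff : rsum2 (fun x z => D x z * D x z) = 0.
  move=> /rsum2_sq0 h x z; have := h x z; rewrite /D /T; lra.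
have FD : Fo ls = rsum2 (fun x z => D x z * D x z).
  by apply: rsum2_eq => x z; rewrite /D; ring.
apply: NNPP => hne.
have pos : 0 < rsum2 (fun x z => D x z * D x z).
  have := rsum2_ge0 (fun x z => Rle_0_sqr (D x z)); rewrite /Rsqr; lra.
(* variational inequality *)
have VI : forall lam, stoch lam ->
    rsum2 (fun x z => D x z * cl P lam x z) <= rsum2 (fun x z => D x z * cl P ls x z).
  move=> lam [hl0 hl1]; apply: Rnot_lt_le => hlt.
  pose d x z := cl P lam x z - cl P ls x z.
  set del := rsum2 (fun x z => D x z * d x z).
  have Edel : del = rsum2 (fun x z => D x z * cl P lam x z) - rsum2 (fun x z => D x z * cl P ls x z).
    rewrite /del -(Rmult_1_l (rsum2 _)) -[X in _ = _ - X](Rmult_1_l) -[X in _ = X - _](Rplus_0_r).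
    rewrite -(Rmult_0_l (rsum2 (fun x z => D x z * cl P lam x z))).
    have := rsum2_lin (fun x z => D x z * cl P lam x z) (fun x z => D x z * cl P ls x z)
                      (fun x z => D x z * cl P ls x z) 1 (-1) 0.
    move=> e.
    have -> : rsum2 (fun x z => D x z * d x z) = rsum2 (fun x z => 1 * (D x z * cl P lam x z) + -1 * (D x z * cl P ls x z) + 0 * (D x z * cl P ls x z)).
      by apply: rsum2_eq => x z; rewrite /d; ring.
    rewrite e; ring.
  have hdel : 0 < del by lra.
  set N := rsum2 (fun x z => d x z * d x z).
  have hN : 0 <= N by apply: rsum2_ge0 => x z; apply: Rle_0_sqr.
  pose t := Rmin 1 (del / (N + 1)).
  have ht0 : 0 < t by apply: Rmin_pos; [lra| apply: Rdiv_lt_0_compat; lra].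
  have ht1 : t <= 1 by apply: Rmin_l.
  have htN : t * N < del.
    have : t <= del / (N + 1) by apply: Rmin_r.
    move=> h; apply: (Rle_lt_trans _ (del / (N + 1) * N)).
      by apply: Rmult_le_compat_r.
    have -> : del / (N + 1) * N = del * (N / (N + 1)) by field; lra.
    have : N / (N + 1) < 1.
      have : 0 < / (N + 1) by apply: Rinv_0_lt_compat; lra.
      have -> : N / (N + 1) = 1 - / (N + 1) by field; lra.
      lra.
    move=> h2; have : del * (N / (N + 1)) < del * 1 by apply: Rmult_lt_compat_l.
    lra.
  pose lt_ y z := ls y z + t * (lam y z - ls y z).
  have st : stoch lt_.
    split.
      move=> y z; rewrite /lt_; have := hl0 y z; have := KL.1 y z.
      rewrite -/ls => a b; nra.
    move=> y; rewrite /lt_ rsum_add (@rsum_eq _ (fun z => t * (lam y z - ls y z)) (fun z => t * lam y z + (-t) * ls y z)); last by move=> z; ring.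
    rewrite rsum_add !rsum_scal hl1 KL.2; ring.
  have Ecl : forall x z, cl P lt_ x z = cl P ls x z + t * d x z.
    move=> x z; rewrite /d /cl /lt_ -rsum_sub -rsum_scal -rsum_add; apply: rsum_eq => y; ring.
  have := HLs _ st.
  have -> : Fo lt_ = 1 * rsum2 (fun x z => D x z * D x z) + (-2 * t) * del + (t * t) * N.
    rewrite /del /N -rsum2_lin; apply: rsum2_eq => x z; rewrite Ecl /D; ring.
  rewrite FD => h.
  have : 2 * t * del <= t * (t * N) by nra.
  move=> h2; have : 2 * del <= t * N.
    apply: (Rmult_le_reg_l t) => //; nra.
  lra.
(* the decision problem with actions Z and utility D *)
have Hatt : forall y, exists a, rmax z0 (fun a => rsum (fun x => margXY P x y * D x a)) =
                                rsum (fun x => margXY P x y * D x a).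
  by move=> y; apply: rmax_att.
pose g y := proj1_sig (constructive_indefinite_description _ (Hatt y)).
have gP : forall y, rmax z0 (fun a => rsum (fun x => margXY P x y * D x a)) =
                    rsum (fun x => margXY P x y * D x (g y)).
  by move=> y; rewrite /g; case: constructive_indefinite_description.
pose lg y z := if z == g y then 1 else 0.
have slg : stoch lg.
  split; first by move=> y z; rewrite /lg; case: (z == g y); lra.
  by move=> y; rewrite /lg (rsum_pick _ (fun _ => 1)).
have Rk : reward z0 (kappa P) (margX P) D = rsum2 (fun x z => D x z * cl P lg x z).
  rewrite reward_kappa // (rsum_eq _ _ _ gP) rsum_swap; apply: rsum_eq => x.
  rewrite /cl (@rsum_eq _ _ (fun z => rsum (fun y => margXY P x y * (if z == g y then D x z else 0)))).
    rewrite rsum_swap; apply: rsum_eq => y; rewrite rsum_scal rsum_pick //.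
  move=> z; rewrite -rsum_scal; apply: rsum_eq => y; rewrite /lg; case: (z == g y); ring.
have Rm : rsum2 (fun x z => D x z * T x z) <= reward z0 (mu P) (margX P) D.
  rewrite reward_mu // /rsum2 rsum_swap; apply: rsum_le => z.
  apply: Rle_trans (rmax_ge _ z0 _ z); right; apply: rsum_eq => x; rewrite /T; ring.
have ET : rsum2 (fun x z => D x z * T x z) =
          rsum2 (fun x z => D x z * cl P ls x z) + rsum2 (fun x z => D x z * D x z).
  have := rsum2_lin (fun x z => D x z * cl P ls x z) (fun x z => D x z * D x z) (fun x z => 0) 1 1 0.
  move=> e; have -> : rsum2 (fun x z => D x z * T x z) = rsum2 (fun x z => 1 * (D x z * cl P ls x z) + 1 * (D x z * D x z) + 0 * 0).
    by apply: rsum2_eq => x z; rewrite /D; ring.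
  rewrite e; ring.
have := H Z z0 D; have := VI _ slg; lra.
Qed.

Theorem mainTheorem4 (X Y Z : finType) (P : X -> Y -> Z -> R) :
  is_dist P ->
  (forall x : X, (0 < margX P x)%R) ->
  (UItilde P = 0%R <->
   forall (A : finType) (a0 : A) (u : X -> A -> R),
     (reward a0 (mu P) (margX P) u <= reward a0 (kappa P) (margX P) u)%R).
Proof.
move=> hP hX; have [[Q0 [hQ0 EQ0]] Hmin] := UItilde_spec _ _ _ _ hP.
split.
  move=> h0 A a0 u; rewrite h0 in EQ0.
  have hI := (gibbs _ _ _ _ hQ0.1).2 EQ0.
  have [lam [l0 [l1 l2]]] := indep_garble _ _ _ _ _ hQ0 hI.
  exact: garble_reward l0 l1 l2.
move=> H; have [lam [[l0 l1] lc]] := blackwell _ _ _ _ hP hX H.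
have hP0 := hP.1.
pose Q x y z := margXY P x y * lam y z.
have mXY : forall x y, margXY Q x y = margXY P x y.
  by move=> x y; rewrite /margXY /Q rsum_scal -/(margXY P x y) l1 Rmult_1_r.
have hQ : DeltaP P Q.
  split; [split|split].
  - move=> x y z; apply: Rmult_le_pos => //; exact: XY_ge0.
  - rewrite -hP.2; apply: rsum_eq => x; apply: rsum_eq => y; exact: mXY x y.
  - exact: mXY.
  - by move=> x z; rewrite lc.
have hI : forall x y z, Q x y z * margY Q y = margXY Q x y * margYZ Q y z.
  move=> x y z; rewrite /margY /margYZ (rsum_eq _ _ _ (fun x => mXY x y)).
  rewrite mXY /Q rsum_scar; ring.
have M0 := indep_MI0 _ _ _ _ hI.
have := Hmin Q hQ; have := (gibbs _ _ _ _ hQ0.1).1; rewrite M0 EQ0; lra.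
Qed.
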